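(* Let $\boldsymbol\Phi':=\mathbf wx_N$ (apply $\mathbf w$, then multiply by $x_N$). Then $\boldsymbol\Phi'=s^{N-1}\Xi_1\boldsymbol\Phi$, and for every $v\in\mathbb N_0^N$ and $\mathbb T\in\mathrm{Tab}_\lambda$, $$P_{v,\mathbb T}\boldsymbol\Phi'=s^{N-1+\mathrm{CT}_{\mathbb T}[r_v[1]]}q^{v_1}P_{v,\mathbb T}\boldsymbol\Phi .$$
   Context: $N\ge2$, $q,s$ indeterminates, $K=\mathbb C(q,s)$. Operators act on the right, composed left to right. $\mathcal H_N(s)$ is generated by $T_1,\dots,T_{N-1}$ with $(T_i+1)(T_i-s)=0$ and braid relations. $\lambda$ a partition of $N$ (French convention, rows numbered bottom to top); $\mathrm{Tab}_\lambda$ = reverse standard tableaux (bijective fillings by $1,\dots,N$ strictly decreasing left to right in rows and bottom to top in columns); $\mathrm{CT}_{\mathbb T}[i]$ = column minus row of the cell of $i$; $\mathbb T^{(i,j)}$ exchanges $i,j$. $V_\lambda$ has basis $\mathrm{Tab}_\lambda$, right action $\mathbb TT_i=s\mathbb T$ if $i,i+1$ share a row, $-\mathbb T$ if they share a column, and if $i$ is in a higher row than $i+1$, with $m=\mathrm{CT}_{\mathbb T}[i+1]-\mathrm{CT}_{\mathbb T}[i]>0$, $\mathbb TT_i=\frac{s-1}{1-s^m}\mathbb T+\frac{s(1-s^{m+1})(1-s^{m-1})}{(1-s^m)^2}\mathbb T^{(i,i+1)}$; remaining case determined by this formula for $\mathbb T^{(i,i+1)}$ and the quadratic relation. $\mathcal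 M_\lambda=K[x_1,\dots,x_N]\otimes V_\lambda$; $(p\otimes u)\mathbf T_i=(1-s)\frac{x_{i+1}(p-p^{s_i})}{x_i-x_{i+1}}\otimes u+p^{s_i}\otimes uT_i$ ($p^{s_i}$: $x_i,x_{i+1}$ exchanged), $(p\otimes u)\mathbf w=p(qx_N,x_1,\dots,x_{N-1})\otimes uT_1\cdots T_{N-1}$, $\mathbf T_i^{-1}=s^{-1}(\mathbf T_i+1-s)$, $\Xi_i=s^{i-N}\mathbf T_{i-1}^{-1}\cdots\mathbf T_1^{-1}\mathbf w\mathbf T_{N-1}\cdots\mathbf T_i$, $\boldsymbol\Phi=\mathbf T_1^{-1}\cdots\mathbf T_{N-1}^{-1}x_N$. For $v\in\mathbb N_0^N$, $r_v[i]=\#\{j\le i:v_j\ge v_i\}+\#\{j>i:v_j>v_i\}$. $P_{v,\mathbb T}$ denotes the vector-valued nonsymmetric Macdonald polynomial: the simultaneous eigenfunction of the $\Xi_i$ in $\mathcal M_\lambda$ with $P_{v,\mathbb T}\Xi_i=q^{v_i}s^{\mathrm{CT}_{\mathbb T}[r_v[i]]}P_{v,\mathbb T}$ for all $i$. *)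

(* Defs.v *)
From HB Require Import structures.
From mathcomp Require Import all_boot all_order all_algebra.
From mathcomp Require Import reals Rstruct complex fraction.
From mathcomp Require Import mpoly.
From Stdlib Require Import ClassicalEpsilon.
Set Implicit Arguments. Unset Strict Implicit. Unset Printing Implicit Defensive.
Import Order.TTheory GRing.Theory Num.Theory.
Local Open Scope ring_scope.

(* The field K = C(q,s): fraction field of C[q][s], C = R[i] the complex numbers. *)
Notation CC := (Rdefinitions.R[i]).
Notation Kpoly := {poly {poly CC}}.
Notation K := {fraction Kpoly}.
Definition qK : K := FracField.tofrac ((('X : {poly CC})%:P : Kpoly)).
Definition sK : K := FracField.tofrac ('X : Kpoly).

Section HeckeModule.
Variables (N : nat) (lam : seq nat).

(* lam is a partition of N (rows listed bottom to top, French convention). *)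
Definition is_partition : bool :=
  [&& sorted geq lam, all (fun k => 0 < k)%N lam & sumn lam == N].

(* cells (row, column), 0-based, row 0 = bottom row *)
Definition in_shape (rc : nat * nat) : bool :=
  (rc.1 < size lam)%N && (rc.2 < nth 0%N lam rc.1)%N.

(* A filling: entry e : 'I_N (standing for the number e+1) |-> its cell (row, col). *)
Definition filling := {ffun 'I_N -> 'I_N * 'I_N}.
Definition cellN (f : filling) (e : 'I_N) : nat * nat := (val (f e).1, val (f e).2).

Definition is_rstab (f : filling) : bool :=
  [&& [forall e1, forall e2, (cellN f e1 == cellN f e2) ==> (e1 == e2)],
      [forall e, in_shape (cellN f e)],
      [forall r : 'I_N, forall c : 'I_N,
          in_shape (val r, val c) ==> [exists e, cellN f e == (val r, val c)]],
      [forall e1, forall e2,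
          (((cellN f e1).1 == (cellN f e2).1) && ((cellN f e1).2 < (cellN f e2).2)%N)
          ==> (e2 < e1)%N] &
      [forall e1, forall e2,
          (((cellN f e1).2 == (cellN f e2).2) && ((cellN f e1).1 < (cellN f e2).1)%N)
          ==> (e2 < e1)%N]].

Definition tab := {f : filling | is_rstab f}.

(* row / column / content of the (1-based) entry k in T *)
Definition rowT (T : tab) (k : nat) : nat :=
  if insub k.-1 is Some e then (cellN (val T) e).1 else 0%N.
Definition colT (T : tab) (k : nat) : nat :=
  if insub k.-1 is Some e then (cellN (val T) e).2 else 0%N.
Definition CT (T : tab) (k : nat) : int := (colT T k)%:Z - (rowT T k)%:Z.

(* the filling T^{(k,k+1)} (1-based entries k, k+1 exchanged) *)
Definition swapf (f : filling) (k : nat) : filling :=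
  [ffun e : 'I_N => f (insubd e (if val e == k.-1 then k
                                  else if val e == k then k.-1 else val e))].

Definition aco (m : int) : K := (sK - 1) / (1 - sK ^ m).
Definition bco (m : int) : K :=
  sK * (1 - sK ^ (m + 1)) * (1 - sK ^ (m - 1)) / (1 - sK ^ m) ^+ 2.

(* coefficient of U in  T T_k  (right action of the Hecke generator T_k on V_lambda) *)
Definition hcoef (k : nat) (T U : tab) : K :=
  let r1 := rowT T k in let r2 := rowT T k.+1 in
  let c1 := colT T k in let c2 := colT T k.+1 in
  if r1 == r2 then (if U == T then sK else 0)
  else if c1 == c2 then (if U == T then -1 else 0)
  else if (r2 < r1)%N then
    let m := CT T k.+1 - CT T k in
    (if U == T then aco m else 0) + (if val U == swapf (val T) k then bco m else 0)
  else
    (* remaining case: determined by the formula for T' = T^{(k,k+1)}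
       (T' T_k = a T' + b T) and the quadratic relation *)
    let m' := CT T k - CT T k.+1 in
    let a := aco m' in let b := bco m' in
    (if U == T then sK - 1 - a else 0)
    + (if val U == swapf (val T) k then ((sK - 1 - a) * a + sK) / b else 0).

(* V_lambda: vectors = coordinates on the basis Tab_lambda *)
Definition Vl := {ffun tab -> K}.
Definition deltaV (T : tab) : Vl := [ffun U => (U == T)%:R].
Definition heckeV (k : nat) (u : Vl) : Vl := [ffun U => \sum_T u T * hcoef k T U].

(* K[x_1..x_N]; x_j is 'X_(j-1) *)
Notation Pol := {mpoly K[N]}.
Definition Xn (j : nat) : Pol := if insub j is Some o then 'X_o else 0.
Definition tsw (k : nat) (i : 'I_N) : 'I_N :=
  insubd i (if val i == k.-1 then k else if val i == k then k.-1 else val i).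
(* p^{s_k}: x_k and x_{k+1} exchanged *)
Definition ssub (k : nat) (p : Pol) : Pol := p \mPo [tuple 'X_(tsw k i) | i < N].
Definition wsub (p : Pol) : Pol :=
  p \mPo [tuple (if val i == 0%N then qK *: Xn N.-1 else Xn (val i).-1) | i < N].
(* (1-s) x_{k+1} (p - p^{s_k}) / (x_k - x_{k+1}) : the unique polynomial quotient *)
Definition ddterm (k : nat) (p : Pol) : Pol :=
  epsilon (inhabits 0) (fun r : Pol =>
    r * (Xn k.-1 - Xn k) = (1 - sK) *: (Xn k * (p - ssub k p))).

(* M_lambda = K[x] (x) V_lambda; m = sum_T m(T) (x) T *)
Definition Mod := {ffun tab -> Pol}.
Definition liftV (F : Vl -> Vl) (m : Mod) : Mod :=
  [ffun U => \sum_T F (deltaV T) U *: m T].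
Definition mapM (g : Pol -> Pol) (m : Mod) : Mod := [ffun U => g (m U)].
Definition scaleM (c : K) (m : Mod) : Mod := [ffun U => c *: m U].

(* operators on M_lambda (acting on the right, m |-> m A) *)
Definition bT (k : nat) (m : Mod) : Mod :=
  [ffun U => ddterm k (m U) + liftV (heckeV k) (mapM (ssub k) m) U].
Definition bTinv (k : nat) (m : Mod) : Mod :=
  [ffun U => sK^-1 *: (bT k m U + (1 - sK) *: m U)].
Definition bw (m : Mod) : Mod :=
  liftV (fun u => foldl (fun u k => heckeV k u) u (iota 1 N.-1)) (mapM wsub m).
Definition mulxN (m : Mod) : Mod := [ffun U => Xn N.-1 * m U].

(* Xi_i = s^{i-N} T_{i-1}^{-1} ... T_1^{-1} w T_{N-1} ... T_i  (composed left to right) *)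
Definition Xi (i : nat) (m : Mod) : Mod :=
  let m1 := foldl (fun m k => bTinv k m) m (rev (iota 1 i.-1)) in
  let m2 := bw m1 in
  let m3 := foldl (fun m k => bT k m) m2 (rev (iota i (N - i))) in
  scaleM (sK ^ (i%:Z - N%:Z)) m3.

Definition Phi (m : Mod) : Mod := mulxN (foldl (fun m k => bTinv k m) m (iota 1 N.-1)).
Definition Phi' (m : Mod) : Mod := mulxN (bw m).

(* v in N_0^N as v : 'I_N -> nat; vnat v j = v_{j+1} *)
Definition vnat (v : 'I_N -> nat) (j : nat) : nat := if insub j is Some o then v o else 0%N.
(* r_v[i], i 1-based *)
Definition rv (v : 'I_N -> nat) (i : nat) : nat :=
  (#|[pred j : 'I_N | (j < i)%N && (vnat v i.-1 <= v j)%N]|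
   + #|[pred j : 'I_N | (i <= j)%N && (vnat v i.-1 < v j)%N]|)%N.

End HeckeModule.

(* Main.v *)
Require Import Defs.
From HB Require Import structures.
From mathcomp Require Import all_boot all_order all_algebra.
From mathcomp Require Import reals Rstruct complex fraction.
From mathcomp Require Import mpoly.
From mathcomp Require Import ring lra zify.
From Stdlib Require Import ClassicalEpsilon.
Import Order.TTheory GRing.Theory Num.Theory.
Local Open Scope ring_scope.
Set Implicit Arguments. Unset Strict Implicit. Unset Printing Implicit Defensive.
Section PolyPart.
Variables (R : fieldType) (N k : nat).
Hypothesis hk0 : (0 < k)%N.
Hypothesis hkN : (k < N)%N.

Let hk1 : (k.-1 < N)%N. Proof. by apply: leq_ltn_trans (leq_pred k) hkN. Qed.
Let i0 : 'I_N := Ordinal hk1.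
Let i1 : 'I_N := Ordinal hkN.

Lemma tsw_val (e : 'I_N) : val (tsw k e) =
  if val e == k.-1 then k else if val e == k then k.-1 else val e.
Proof.
rewrite /tsw val_insubd; case: ifP => //.
case: eqP => _; first by rewrite hkN.
case: eqP => _; first by rewrite hk1.
by rewrite ltn_ord.
Qed.

Lemma tswK : involutive (@tsw N k).
Proof.
move=> e; apply: val_inj; rewrite !tsw_val.
move: (val e) => x.
have hk := prednK hk0. move: (k.-1) hk => k' hk.
have hne : (k == k') = false by apply/eqP; lia.
have [->|hx1] := eqVneq x k'; first by rewrite eqxx hne ?eqxx.
have [->|hx2] := eqVneq x k; first by rewrite ?eqxx.
by rewrite ?(negbTE hx1) ?(negbTE hx2).
Qed.

Lemma tsw0 : tsw k i0 = i1.
Proof. by apply: val_inj; rewrite tsw_val eqxx. Qed.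
Lemma tsw1 : tsw k i1 = i0.
Proof. by rewrite -tsw0 tswK. Qed.
Lemma tsw_other (e : 'I_N) : e != i0 -> e != i1 -> tsw k e = e.
Proof.
move=> h0 h1; apply: val_inj; rewrite tsw_val.
move: h0 h1; rewrite -!(inj_eq val_inj) /= => /negbTE -> /negbTE -> //.
Qed.

Local Notation Pol := {mpoly R[N]}.
Definition gss (p : Pol) : Pol := p \mPo [tuple 'X_(tsw k i) | i < N].
Local Notation ss := gss.

Lemma ssubD (p q : Pol) : ss (p + q) = ss p + ss q. Proof. exact: comp_mpolyD. Qed.
Lemma ssubB (p q : Pol) : ss (p - q) = ss p - ss q. Proof. exact: comp_mpolyB. Qed.
Lemma ssubN (p : Pol) : ss (- p) = - ss p. Proof. exact: comp_mpolyN. Qed.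
Lemma ssubM (p q : Pol) : ss (p * q) = ss p * ss q. Proof. exact: rmorphM. Qed.
Lemma ssubZ c (p : Pol) : ss (c *: p) = c *: ss p. Proof. exact: comp_mpolyZ. Qed.
Lemma ssubC c : ss c%:MP = c%:MP. Proof. exact: comp_mpolyC. Qed.
Lemma ssub1 : ss 1 = 1. Proof. exact: comp_mpoly1. Qed.
Lemma ssub0 : ss 0 = 0. Proof. exact: comp_mpoly0. Qed.
Lemma ssubX i : ss 'X_i = 'X_(tsw k i).
Proof. by rewrite /gss comp_mpolyXU -tnth_nth tnth_map tnth_ord_tuple. Qed.
Lemma ssubXn i e : ss ('X_i ^+ e) = 'X_(tsw k i) ^+ e.
Proof. by elim: e => [|e IH]; rewrite ?expr0 ?ssub1 // !exprS ssubM IH ssubX. Qed.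

Lemma ssubK (p : Pol) : ss (ss p) = p.
Proof.
elim/mpolyind: p => [|c m p _ _ IH]; first by rewrite !ssub0.
suff hX : ss (ss 'X_[m]) = 'X_[m] by rewrite !ssubD !ssubZ IH hX.
rewrite mpolyXE_id.
rewrite (big_morph ss ssubM ssub1) (big_morph ss ssubM ssub1).
by apply: eq_bigr => i _; rewrite !ssubXn tswK.
Qed.
End PolyPart.

Section DD.
Variables (R : fieldType) (s : R) (N k : nat).
Hypothesis hk0 : (0 < k)%N.
Hypothesis hkN : (k < N)%N.

Let hk1 : (k.-1 < N)%N. Proof. by apply: leq_ltn_trans (leq_pred k) hkN. Qed.
Let i0 : 'I_N := Ordinal hk1.
Let i1 : 'I_N := Ordinal hkN.
Local Notation Pol := {mpoly R[N]}.
Local Notation ss := (@gss R N k).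

Definition gXn (j : nat) : Pol := if insub j is Some o then 'X_o else 0.
Definition gdd (p : Pol) : Pol :=
  epsilon (inhabits 0) (fun r : Pol =>
    r * (gXn k.-1 - gXn k) = (1 - s) *: (gXn k * (p - ss p))).

Lemma gXn0 : gXn k.-1 = 'X_i0.
Proof. by rewrite /gXn insubT. Qed.
Lemma gXn1 : gXn k = 'X_i1.
Proof. by rewrite /gXn insubT. Qed.

Lemma t0 : tsw k i0 = i1.
Proof. by apply: val_inj; rewrite tsw_val // eqxx. Qed.
Lemma t1 : tsw k i1 = i0.
Proof. by rewrite -t0 tswK. Qed.
Lemma tother (e : 'I_N) : e != i0 -> e != i1 -> tsw k e = e.
Proof.
move=> h0 h1; apply: val_inj; rewrite tsw_val //.
move: h0 h1; rewrite -!(inj_eq val_inj) /= => /negbTE -> /negbTE -> //.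
Qed.

Let d : Pol := 'X_i0 - 'X_i1.

Lemma i01 : i0 != i1.
Proof. rewrite -(inj_eq val_inj) /=; apply/eqP; lia. Qed.

Lemma dnz : d != 0.
Proof.
apply/eqP => /(congr1 (mcoeff U_(i0))).
rewrite mcoeffB !mcoeffXU eqxx eq_sym (negbTE i01) mcoeff0 subr0.
by move/eqP; rewrite oner_eq0.
Qed.

Definition Pdiv (q : Pol) := exists r, r * d = q - ss q.

Lemma PdivM a b : Pdiv a -> Pdiv b -> Pdiv (a * b).
Proof.
move=> [ra ha] [rb hb]; exists (ra * b + ss a * rb).
rewrite ssubM mulrDl -mulrA (mulrC b) mulrA ha -mulrA hb; ring.
Qed.

Lemma Pdiv1 : Pdiv 1.
Proof. by exists 0; rewrite ssub1 mul0r subrr. Qed.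

Lemma PdivX j : Pdiv 'X_j.
Proof.
rewrite /Pdiv ssubX //.
have [->|h0] := eqVneq j i0; first by exists 1; rewrite t0 mul1r.
have [->|h1] := eqVneq j i1; first by exists (-1); rewrite t1 mulN1r opprB.
by exists 0; rewrite tother // mul0r subrr.
Qed.

Lemma PdivXn j e : Pdiv ('X_j ^+ e).
Proof.
elim: e => [|e IH]; first by rewrite expr0; exact: Pdiv1.
by rewrite exprS; apply: PdivM => //; exact: PdivX.
Qed.

Lemma exdiv p : Pdiv p.
Proof.
elim/mpolyind: p => [|c m p _ _ [r IH]]; first by exists 0; rewrite ssub0 mul0r subr0.
have [rX hX] : Pdiv 'X_[m].
  rewrite mpolyXE_id; apply: big_ind => //; [exact: Pdiv1|exact: PdivM|].
  by move=> i _; exact: PdivXn.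
exists (c *: rX + r).
rewrite ssubD ssubZ mulrDl -scalerAl hX IH scalerBr; ring.
Qed.

Lemma ddE p : gdd p * d = (1 - s) *: ('X_i1 * (p - ss p)).
Proof.
rewrite /gdd /d -gXn0 -gXn1.
rewrite gXn0 gXn1.
apply: (epsilon_spec (inhabits (0:Pol)) (fun r0 : Pol => r0 * ('X_i0 - 'X_i1) = (1 - s) *: ('X_i1 * (p - ss p)))).
have [r hr] := exdiv p.
exists ((1 - s) *: ('X_i1 * r)).
by rewrite -scalerAl -mulrA hr.
Qed.

Lemma ddeq p r : r * d = (1 - s) *: ('X_i1 * (p - ss p)) -> gdd p = r.
Proof. by move=> h; apply: (mulIf dnz); rewrite ddE h. Qed.

Lemma gdd_lin a p q : gdd (a *: p + q) = a *: gdd p + gdd q.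
Proof.
apply: ddeq; rewrite mulrDl -scalerAl !ddE ssubD ssubZ -!mul_mpolyC; ring.
Qed.

Lemma gdd0 : gdd 0 = 0.
Proof. by apply: ddeq; rewrite ssub0 subrr mulr0 scaler0 mul0r. Qed.

Lemma gddD p q : gdd (p + q) = gdd p + gdd q.
Proof. by have := gdd_lin 1 p q; rewrite !scale1r. Qed.
Lemma gddZ a p : gdd (a *: p) = a *: gdd p.
Proof. by have := gdd_lin a p 0; rewrite !addr0 gdd0 addr0. Qed.

Lemma ssd : ss d = - d.
Proof. by rewrite /d ssubB !ssubX t0 t1 opprB. Qed.

Lemma hA p : ss (gdd p) * d = (1 - s) *: ('X_i0 * (p - ss p)).
Proof.
have := congr1 ss (ddE p).
rewrite ssubM ssd ssubZ ssubM ssubB ssubK // ssubX t1 => h.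
by apply: oppr_inj; rewrite -mulrN h -scalerN -mulrN opprB.
Qed.

Lemma gdd_ss p : ss (gdd p) + gdd (ss p) = (1 - s) *: (p - ss p).
Proof.
apply: (mulIf dnz); rewrite mulrDl hA ddE ssubK // /d -!mul_mpolyC; ring.
Qed.

Lemma gdd_gdd p : gdd (gdd p) = (s - 1) *: gdd p.
Proof.
have h1 : gdd p - ss (gdd p) = (s - 1) *: (p - ss p).
  by apply: (mulIf dnz); rewrite mulrBl hA ddE /d -!mul_mpolyC; ring.
apply: ddeq; rewrite h1 -scalerAl ddE -!mul_mpolyC; ring.
Qed.

Lemma gdd_sum (I : Type) (r : seq I) (P : pred I) (F : I -> Pol) :
  gdd (\sum_(i <- r | P i) F i) = \sum_(i <- r | P i) gdd (F i).
Proof. by apply: (big_morph gdd gddD gdd0). Qed.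

End DD.

Section ModGen.
Variables (R : fieldType) (s : R) (N k : nat).
Hypothesis hk0 : (0 < k)%N.
Hypothesis hkN : (k < N)%N.
Hypothesis hs : s != 0.
Variables (I : finType) (h : I -> I -> R).
Hypothesis hquad : forall T W,
  \sum_U h T U * h U W = (s - 1) * h T W + s * (W == T)%:R.

Local Notation Pol := {mpoly R[N]}.
Local Notation ss := (@gss R N k).
Local Notation D := (@gdd R s N k).
Local Notation MM := {ffun I -> Pol}.

Definition gbT (m : MM) : MM := [ffun U => D (m U) + \sum_T h T U *: ss (m T)].
Definition gbTinv (m : MM) : MM := [ffun U => s^-1 *: (gbT m U + (1 - s) *: m U)].

Lemma ss_sum (F : I -> Pol) : ss (\sum_T F T) = \sum_T ss (F T).
Proof. by apply: (big_morph ss (@ssubD _ _ _) (@ssub0 _ _ _)). Qed.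

Lemma gbT2 (m : MM) U : gbT (gbT m) U = (s - 1) *: gbT m U + s *: m U.
Proof.
set A := \sum_T h T U *: ss (m T).
set A' := \sum_T h T U *: m T.
have e1 : \sum_T h T U *: ss (gbT m T) =
   \sum_T h T U *: ss (D (m T)) + ((s - 1) *: A' + s *: m U).
  have -> : \sum_T h T U *: ss (gbT m T) =
     \sum_T h T U *: ss (D (m T)) + \sum_T h T U *: \sum_T' h T' T *: m T'.
    rewrite -big_split /=; apply: eq_bigr => T _.
    rewrite ffunE ssubD ss_sum scalerDr; congr (_ + _); congr (_ *: _).
    by apply: eq_bigr => T' _; rewrite ssubZ ssubK.
  congr (_ + _).
  have -> : \sum_T h T U *: \sum_T' h T' T *: m T' =
      \sum_T' (\sum_T h T' T * h T U) *: m T'.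
    rewrite (eq_bigr (fun T => \sum_T' (h T U * h T' T) *: m T')); last first.
      by move=> T _; rewrite scaler_sumr; apply: eq_bigr => T' _; rewrite scalerA.
    rewrite exchange_big /=; apply: eq_bigr => T' _.
    by rewrite scaler_suml; apply: eq_bigr => T _; rewrite mulrC.
  rewrite (eq_bigr (fun T' => (s - 1) *: (h T' U *: m T') + (s * (U == T')%:R) *: m T'));
    last by move=> T' _; rewrite hquad scalerDl scalerA.
  rewrite big_split /= -scaler_sumr; congr (_ + _).
  rewrite (bigD1 U) //= eqxx mulr1 big1 ?addr0 // => T' hT'.
  by rewrite eq_sym (negbTE hT') mulr0 scale0r.
have e2 : \sum_T h T U *: D (ss (m T)) =
    ((1 - s) *: A' - (1 - s) *: A) - \sum_T h T U *: ss (D (m T)).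
  apply/eqP; rewrite eq_sym subr_eq; apply/eqP.
  rewrite -big_split /= /A /A' !scaler_sumr -sumrB; apply: eq_bigr => T _.
  by rewrite -scalerDr (addrC (D _)) gdd_ss // -!mul_mpolyC; ring.
rewrite !ffunE e1 gddD // gdd_gdd // gdd_sum //.
rewrite (eq_bigr (fun T => h T U *: D (ss (m T)))); last by move=> T _; rewrite gddZ.
rewrite e2 -/A -!mul_mpolyC; ring.
Qed.

Lemma gbTK (m : MM) : gbTinv (gbT m) = m.
Proof.
apply/ffunP => U; rewrite ffunE gbT2 addrAC -scalerDl addrC.
rewrite (_ : s - 1 + (1 - s) = 0) ?scale0r ?addr0; last by ring.
by rewrite scalerA mulVf // scale1r.
Qed.

Lemma gbTZ c (m : MM) : gbT [ffun U => c *: m U] = [ffun U => c *: gbT m U].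
Proof.
apply/ffunP => U; rewrite !ffunE gddZ // scalerDr; congr (_ + _).
rewrite scaler_sumr; apply: eq_bigr => T _.
by rewrite ffunE ssubZ !scalerA mulrC.
Qed.

Lemma gbTinvZ c (m : MM) : gbTinv [ffun U => c *: m U] = [ffun U => c *: gbTinv m U].
Proof.
apply/ffunP => U; rewrite /gbTinv gbTZ !ffunE -!mul_mpolyC; ring.
Qed.
End ModGen.

Section Tab.
Variables (N : nat) (lam : seq nat).

Lemma rs_inj (f : filling N) : is_rstab lam f ->
  forall a b, cellN f a = cellN f b -> a = b.
Proof.
case/and5P => /forallP h _ _ _ _ a b e.
by have /forallP /(_ b) /implyP /(_ (introT eqP e)) /eqP := h a.
Qed.

Lemma rs_shape (f : filling N) : is_rstab lam f -> forall a, in_shape lam (cellN f a).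
Proof. by case/and5P => _ /forallP h _ _ _. Qed.

Lemma rs_surj (f : filling N) : is_rstab lam f ->
  forall r c : 'I_N, in_shape lam (val r, val c) -> exists e, cellN f e = (val r, val c).
Proof.
case/and5P => _ _ /forallP h _ _ r c hs.
have /forallP /(_ c) /implyP /(_ hs) /existsP [e /eqP he] := h r.
by exists e.
Qed.

Lemma rs_row (f : filling N) : is_rstab lam f -> forall a b,
  (cellN f a).1 = (cellN f b).1 -> ((cellN f a).2 < (cellN f b).2)%N -> (b < a)%N.
Proof.
case/and5P => _ _ _ /forallP h _ a b e1 e2.
have /forallP /(_ b) /implyP := h a; apply; rewrite e1 eqxx e2 //.
Qed.

Lemma rs_col (f : filling N) : is_rstab lam f -> forall a b,
  (cellN f a).2 = (cellN f b).2 -> ((cellN f a).1 < (cellN f b).1)%N -> (b < a)%N.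
Proof.
case/and5P => _ _ _ _ /forallP h a b e1 e2.
have /forallP /(_ b) /implyP := h a; apply; rewrite e1 eqxx e2 //.
Qed.

Lemma insub_ord (j : nat) (h : (j < N)%N) : insub j = Some (Ordinal h).
Proof.
case: insubP => [u _ hu|]; last by rewrite h.
by congr Some; apply: val_inj.
Qed.

End Tab.

Section Swap.
Variables (N : nat) (lam : seq nat) (k : nat).
Hypothesis hk0 : (0 < k)%N.
Hypothesis hkN : (k < N)%N.
Hypothesis hpart : is_partition N lam.

Let hk1 : (k.-1 < N)%N. Proof. by apply: leq_ltn_trans (leq_pred k) hkN. Qed.
Let e0 : 'I_N := Ordinal hk1.
Let e1 : 'I_N := Ordinal hkN.

Lemma swapfE (f : filling N) e : swapf f k e = f (tsw k e).
Proof. by rewrite ffunE. Qed.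

Lemma cellN_swap (f : filling N) e : cellN (swapf f k) e = cellN f (tsw k e).
Proof. by rewrite /cellN ffunE. Qed.

Lemma tsw_spec (e : 'I_N) :
  (val e = k.-1 /\ val (tsw k e) = k) \/ (val e = k /\ val (tsw k e) = k.-1) \/
  (val e <> k.-1 /\ val e <> k /\ val (tsw k e) = val e).
Proof.
rewrite tsw_val //.
have [h|h] := eqVneq (val e) k.-1; first by left.
have [h'|h'] := eqVneq (val e) k; first by right; left.
by right; right; split; [apply/eqP|split; [apply/eqP|]].
Qed.

Lemma tse0 : tsw k e0 = e1.
Proof. by apply: val_inj; rewrite tsw_val // eqxx. Qed.
Lemma tse1 : tsw k e1 = e0.
Proof. by rewrite -tse0 tswK. Qed.

Lemma swap_rstab (f : filling N) : is_rstab lam f ->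
  (cellN f e0).1 != (cellN f e1).1 -> (cellN f e0).2 != (cellN f e1).2 ->
  is_rstab lam (swapf f k).
Proof.
move=> hf hr hc.
have hnot : forall a b : 'I_N, val (tsw k a) = k -> val (tsw k b) = k.-1 ->
   (cellN f (tsw k a)).1 != (cellN f (tsw k b)).1 /\ (cellN f (tsw k a)).2 != (cellN f (tsw k b)).2.
  move=> a b ha hb.
  have -> : tsw k a = e1 by apply: val_inj.
  have -> : tsw k b = e0 by apply: val_inj.
  by rewrite eq_sym (eq_sym (cellN f e1).2).
apply/and5P; split.
- apply/forallP => a; apply/forallP => b; apply/implyP; rewrite !cellN_swap.
  by move=> /eqP /(rs_inj hf) /(congr1 (tsw k)); rewrite !tswK // => ->.
- by apply/forallP => a; rewrite cellN_swap; exact: rs_shape.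
- apply/forallP=> r; apply/forallP=> c; apply/implyP => hs.
  have [e he] := rs_surj hf hs; apply/existsP; exists (tsw k e).
  by rewrite cellN_swap tswK // he.
- apply/forallP=> a; apply/forallP=> b; apply/implyP; rewrite !cellN_swap.
  move=> /andP [/eqP h1 h2]; have hlt := rs_row hf h1 h2.
  have hn : ~ (val (tsw k a) = k /\ val (tsw k b) = k.-1).
    by case=> ha hb; have [+ _] := hnot a b ha hb; rewrite h1 eqxx.
  have sa := tsw_spec a; have sb := tsw_spec b.
  move: hlt hn sa sb; set k' := k.-1; have hk' : k'.+1 = k by rewrite /k' prednK.
  clearbody k'; simpl in *; lia.
- apply/forallP=> a; apply/forallP=> b; apply/implyP; rewrite !cellN_swap.
  move=> /andP [/eqP h1 h2]; have hlt := rs_col hf h1 h2.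
  have hn : ~ (val (tsw k a) = k /\ val (tsw k b) = k.-1).
    by case=> ha hb; have [_ +] := hnot a b ha hb; rewrite h1 eqxx.
  have sa := tsw_spec a; have sb := tsw_spec b.
  move: hlt hn sa sb; set k' := k.-1; have hk' : k'.+1 = k by rewrite /k' prednK.
  clearbody k'; simpl in *; lia.
Qed.

Lemma rowT0 (T : tab N lam) : rowT T k = (cellN (val T) e0).1.
Proof. by rewrite /rowT (insub_ord hk1). Qed.
Lemma rowT1 (T : tab N lam) : rowT T k.+1 = (cellN (val T) e1).1.
Proof. by rewrite /rowT /= (insub_ord hkN). Qed.
Lemma colT0 (T : tab N lam) : colT T k = (cellN (val T) e0).2.
Proof. by rewrite /colT (insub_ord hk1). Qed.
Lemma colT1 (T : tab N lam) : colT T k.+1 = (cellN (val T) e1).2.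
Proof. by rewrite /colT /= (insub_ord hkN). Qed.


Lemma mge2 (T : tab N lam) : (rowT T k.+1 < rowT T k)%N -> colT T k != colT T k.+1 ->
  (1 < CT T k.+1 - CT T k)%R.
Proof.
rewrite /CT rowT0 rowT1 colT0 colT1 => hlt hne.
have hf : is_rstab lam (val T) := valP T.
suff hc : ((cellN (val T) e0).2 < (cellN (val T) e1).2)%N.
  move: hlt hne hc; move: (cellN _ e0) (cellN _ e1) => [r1 c1] [r2 c2] /=.
  move=> h1 /eqP h2 h3; lia.
rewrite ltnNge; apply/negP => hle.
have hlt2 : ((cellN (val T) e1).2 < (cellN (val T) e0).2)%N.
  by rewrite ltn_neqAle eq_sym hne hle.
have hs0 := rs_shape hf e0; case/andP: hs0 => hsz hc1.
case/and3P: hpart => hsort _ _.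
have hnth : (nth 0 lam (cellN (val T) e0).1 <= nth 0 lam (cellN (val T) e1).1)%N.
  have := @sorted_leq_nth _ geq (fun a b c h1 h2 => leq_trans h2 h1) (@leqnn) 0%N lam hsort.
  move=> /(_ (cellN (val T) e1).1 (cellN (val T) e0).1); apply => //.
    by rewrite inE; apply: ltn_trans hsz.
  by apply: ltnW.
have hs : in_shape lam (val ((val T) e1).1, val ((val T) e0).2).
  rewrite /in_shape /=; apply/andP; split; first by apply: ltn_trans hlt hsz.
  by apply: leq_trans hnth; exact: hc1.
have [e he] := rs_surj hf hs.
have h1 : (e < e1)%N.
  apply: (rs_row hf); first by rewrite he.
  by rewrite he.
have h2 : (e0 < e)%N.
  apply: (rs_col hf); first by rewrite he.
  by rewrite he.
move: h1 h2 => /=; have := prednK hk0; lia.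
Qed.

Section SwapT.
Variable (T : tab N lam).
Hypothesis hr : rowT T k != rowT T k.+1.
Hypothesis hc : colT T k != colT T k.+1.

Definition swapT : tab N lam.
Proof.
exists (swapf (val T) k); apply: swap_rstab; first exact: valP.
  by rewrite -rowT0 -rowT1.
by rewrite -colT0 -colT1.
Defined.

Lemma swapT_val : val swapT = swapf (val T) k. Proof. by []. Qed.

Lemma swapT_row0 : rowT swapT k = rowT T k.+1.
Proof. by rewrite rowT0 rowT1 swapT_val cellN_swap tse0. Qed.
Lemma swapT_row1 : rowT swapT k.+1 = rowT T k.
Proof. by rewrite rowT0 rowT1 swapT_val cellN_swap tse1. Qed.
Lemma swapT_col0 : colT swapT k = colT T k.+1.
Proof. by rewrite colT0 colT1 swapT_val cellN_swap tse0. Qed.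
Lemma swapT_col1 : colT swapT k.+1 = colT T k.
Proof. by rewrite colT0 colT1 swapT_val cellN_swap tse1. Qed.
Lemma swapT_CT0 : CT swapT k = CT T k.+1.
Proof. by rewrite /CT swapT_row0 swapT_col0. Qed.
Lemma swapT_CT1 : CT swapT k.+1 = CT T k.
Proof. by rewrite /CT swapT_row1 swapT_col1. Qed.

Lemma swapT_swap : swapf (val swapT) k = val T.
Proof. by apply/ffunP => e; rewrite swapT_val !swapfE tswK. Qed.

Lemma swapT_neq : swapT != T.
Proof.
apply/negP => /eqP he; have := swapT_row0; rewrite he => h.
by move: hr; rewrite h eqxx.
Qed.
End SwapT.
End Swap.

Lemma ifmul (R : ringType) (b : bool) (a : R) : (if b then a else 0) = a * b%:R.
Proof. by case: b; rewrite ?mulr1 ?mulr0. Qed.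

Section Quad.
Variables (R : fieldType) (s : R) (I : finType) (h : I -> I -> R).

Lemma sum_delta (T : I) (F : I -> R) : \sum_U (U == T)%:R * F U = F T.
Proof.
rewrite (bigD1 T) //= eqxx mul1r big1 ?addr0 // => U /negbTE ->.
by rewrite mul0r.
Qed.

Lemma single_quad T a : (forall U, h T U = a * (U == T)%:R) -> a * a = (s - 1) * a + s ->
  forall W, \sum_U h T U * h U W = (s - 1) * h T W + s * (W == T)%:R.
Proof.
move=> hT ha W.
rewrite (eq_bigr (fun U => a * ((U == T)%:R * h U W))); last first.
  by move=> U _; rewrite hT mulrA.
rewrite -mulr_sumr sum_delta !hT.
by case: (W == T); rewrite ?mulr1 ?mulr0 ?addr0 // ha.
Qed.

Lemma pair_quad T T' a b a' b' : T' != T ->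
  (forall U, h T U = a * (U == T)%:R + b * (U == T')%:R) ->
  (forall U, h T' U = a' * (U == T')%:R + b' * (U == T)%:R) ->
  a * a + b * b' = (s - 1) * a + s -> a * b + b * a' = (s - 1) * b ->
  forall W, \sum_U h T U * h U W = (s - 1) * h T W + s * (W == T)%:R.
Proof.
move=> hne hT hT' e1 e2 W.
rewrite (eq_bigr (fun U => a * ((U == T)%:R * h U W) + b * ((U == T')%:R * h U W))); last first.
  by move=> U _; rewrite hT mulrDl !mulrA.
rewrite big_split /= -!mulr_sumr !sum_delta hT hT'.
have hne' : (T == T') = false by rewrite eq_sym (negbTE hne).
have [->|hWT] := eqVneq W T.
  rewrite ?eqxx hne' /=; apply: (@eq_trans _ _ (a * a + b * b')); first ring.
  rewrite e1; ring.
case: (eqVneq W T') => [eW|hWT'].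
  rewrite /=; apply: (@eq_trans _ _ (a * b + b * a')); first ring.
  rewrite e2; ring.
rewrite /=; ring.
Qed.

Lemma qcoefC (a b : R) : b != 0 ->
  a * a + b * (((s - 1 - a) * a + s) / b) = (s - 1) * a + s /\
  a * b + b * (s - 1 - a) = (s - 1) * b.
Proof. move=> hb; split; first field => //. ring. Qed.

Lemma qcoefD (a b : R) : b != 0 ->
  (s - 1 - a) * (s - 1 - a) + (((s - 1 - a) * a + s) / b) * b = (s - 1) * (s - 1 - a) + s /\
  (s - 1 - a) * (((s - 1 - a) * a + s) / b) + (((s - 1 - a) * a + s) / b) * a =
     (s - 1) * (((s - 1 - a) * a + s) / b).
Proof. move=> hb; split; first field => //. ring. Qed.

End Quad.

Lemma bnz (F : fieldType) (t : F) : t != 0 -> (forall n, (0 < n)%N -> t ^+ n != 1) ->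
  forall m : int, (1 < m)%R ->
  t * (1 - t ^ (m + 1)) * (1 - t ^ (m - 1)) / (1 - t ^ m) ^+ 2 != 0.
Proof.
move=> ht0 htn [n|n] hm //.
have hn : (1 < n)%N by [].
have e1 : (n%:Z + 1 = (n.+1)%:Z)%R by rewrite -addn1 PoszD.
have e2 : (n%:Z - 1 = (n.-1)%:Z)%R by rewrite predn_int //; lia.
rewrite e1 e2.
have ne1 : forall j, (0 < j)%N -> 1 - t ^ (Posz j) != 0.
  by move=> j hj; rewrite subr_eq0 eq_sym; apply: htn.
rewrite !mulf_neq0 ?invr_neq0 ?expf_neq0 ?ne1 //; lia.
Qed.

Lemma frac_X_facts (R0 : idomainType) :
  let x := FracField.tofrac ('X : {poly R0}) in
  x != 0 /\ (forall n, (0 < n)%N -> x ^+ n != 1).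
Proof.
move=> x; split; first by rewrite /x tofrac_eq0 polyX_eq0.
move=> n hn; rewrite /x -tofracXn -tofrac1 tofrac_eq.
apply/negP => /eqP h; have := size_polyXn R0 n; rewrite h size_poly1 => -[e].
by rewrite -e in hn.
Qed.

Lemma sK_facts : sK != 0 /\ (forall n, (0 < n)%N -> sK ^+ n != 1).
Proof. exact: frac_X_facts. Qed.

Section HQ.
Variables (N : nat) (lam : seq nat) (k : nat).
Hypothesis hk0 : (0 < k)%N.
Hypothesis hkN : (k < N)%N.
Hypothesis hpart : is_partition N lam.

Lemma hcoefA (T : tab N lam) : rowT T k = rowT T k.+1 ->
  forall U, hcoef k T U = sK * (U == T)%:R.
Proof. by move=> hr U; rewrite /hcoef; cbv zeta; rewrite hr eqxx ifmul. Qed.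

Lemma hcoefB (T : tab N lam) : rowT T k != rowT T k.+1 -> colT T k = colT T k.+1 ->
  forall U, hcoef k T U = -1 * (U == T)%:R.
Proof. by move=> hr hc U; rewrite /hcoef; cbv zeta; rewrite (negbTE hr) hc eqxx ifmul. Qed.

Lemma hcoefC (T T' : tab N lam) : val T' = swapf (val T) k ->
  (rowT T k.+1 < rowT T k)%N -> colT T k != colT T k.+1 ->
  forall U, hcoef k T U = aco (CT T k.+1 - CT T k) * (U == T)%:R
                        + bco (CT T k.+1 - CT T k) * (U == T')%:R.
Proof.
move=> hT' hlt hc U; rewrite /hcoef; cbv zeta.
rewrite (eq_sym (rowT T k)) (ltn_eqF hlt) (negbTE hc) hlt -hT' val_eqE !ifmul.
by [].
Qed.

Lemma hcoefD (T T' : tab N lam) : val T' = swapf (val T) k ->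
  rowT T k != rowT T k.+1 -> colT T k != colT T k.+1 -> ~~ (rowT T k.+1 < rowT T k)%N ->
  forall U, hcoef k T U =
    (sK - 1 - aco (CT T k - CT T k.+1)) * (U == T)%:R
    + ((sK - 1 - aco (CT T k - CT T k.+1)) * aco (CT T k - CT T k.+1) + sK)
        / bco (CT T k - CT T k.+1) * (U == T')%:R.
Proof.
move=> hT' hr hc hlt U; rewrite /hcoef; cbv zeta.
rewrite (negbTE hr) (negbTE hc) (negbTE hlt) -hT' val_eqE !ifmul.
by [].
Qed.
End HQ.

Section HQ2.
Variables (N : nat) (lam : seq nat) (k : nat).
Hypothesis hk0 : (0 < k)%N.
Hypothesis hkN : (k < N)%N.
Hypothesis hpart : is_partition N lam.

Lemma hquad_tab (T W : tab N lam) :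
  \sum_U hcoef k T U * hcoef k U W = (sK - 1) * hcoef k T W + sK * (W == T)%:R.
Proof.
have [sK0 sKn] := sK_facts.
have [hr|hr] := eqVneq (rowT T k) (rowT T k.+1).
  by apply: (single_quad (a := sK)); [exact: hcoefA | ring].
have [hc|hc] := eqVneq (colT T k) (colT T k.+1).
  by apply: (single_quad (a := -1)); [exact: hcoefB | ring].
pose T' := swapT hk0 hkN hpart hr hc.
have hT'v : val T' = swapf (val T) k by [].
have hTv : val T = swapf (val T') k by rewrite (swapT_swap hk0 hkN hpart hr hc).
have hr' : rowT T' k != rowT T' k.+1.
  by rewrite (swapT_row0 hk0 hkN hpart hr hc) (swapT_row1 hk0 hkN hpart hr hc) eq_sym.
have hc' : colT T' k != colT T' k.+1.
  by rewrite (swapT_col0 hk0 hkN hpart hr hc) (swapT_col1 hk0 hkN hpart hr hc) eq_sym.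
have eC0 := swapT_CT0 hk0 hkN hpart hr hc.
have eC1 := swapT_CT1 hk0 hkN hpart hr hc.
have eR0 := swapT_row0 hk0 hkN hpart hr hc.
have eR1 := swapT_row1 hk0 hkN hpart hr hc.
have hne := swapT_neq hk0 hkN hpart hr hc.
case hlt: (rowT T k.+1 < rowT T k)%N.
  have hb : bco (CT T k.+1 - CT T k) != 0.
    exact: (bnz sK0 sKn (mge2 hk0 hkN hpart hlt hc)).
  have [e1 e2] := qcoefC sK (aco (CT T k.+1 - CT T k)) hb.
  apply: (pair_quad hne (hcoefC hT'v hlt hc) _ e1 e2).
  have hnlt' : ~~ (rowT T' k.+1 < rowT T' k)%N.
    by rewrite -/T' eR0 eR1 -leqNgt ltnW.
  by move=> U; rewrite (hcoefD hTv hr' hc' hnlt') eC0 eC1.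
have hlt' : (rowT T' k.+1 < rowT T' k)%N.
  by rewrite eR0 eR1 ltn_neqAle hr /= leqNgt hlt.
have hb : bco (CT T k - CT T k.+1) != 0.
  have := mge2 hk0 hkN hpart hlt' hc'; rewrite eC0 eC1 => hm.
  exact: (bnz sK0 sKn hm).
have [e1 e2] := qcoefD sK (aco (CT T k - CT T k.+1)) hb.
apply: (pair_quad hne (hcoefD hT'v hr hc (negbT hlt)) _ e1 e2).
by move=> U; rewrite (hcoefC hTv hlt' hc') eC0 eC1.
Qed.
End HQ2.

Section Final.
Variables (N : nat) (lam : seq nat).
Hypothesis hpart : is_partition N lam.

Lemma liftV_hecke k (m : Mod N lam) U :
  liftV (heckeV k) m U = \sum_T hcoef k T U *: m T.
Proof.
rewrite ffunE; apply: eq_bigr => T _; rewrite ffunE.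
rewrite (eq_bigr (fun T' => (T' == T)%:R * hcoef k T' U)); last by move=> T' _; rewrite ffunE.
by rewrite sum_delta.
Qed.

Lemma bT_eq k (m : Mod N lam) : bT k m = gbT sK k (hcoef k) m.
Proof.
apply/ffunP => U; rewrite [LHS]ffunE [RHS]ffunE liftV_hecke.
have -> : \sum_T hcoef k T U *: mapM (ssub k) m T = \sum_T hcoef k T U *: gss k (m T).
  by apply: eq_bigr => T _; rewrite ffunE.
reflexivity.
Qed.

Lemma bTinv_eq k (m : Mod N lam) : bTinv k m = gbTinv sK k (hcoef k) m.
Proof. by rewrite /bTinv bT_eq. Qed.

Variable k : nat.
Hypothesis hk0 : (0 < k)%N.
Hypothesis hkN : (k < N)%N.

Lemma bTK (m : Mod N lam) : bTinv k (bT k m) = m.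
Proof.
have [sK0 _] := sK_facts.
rewrite bTinv_eq bT_eq; apply: (gbTK hk0 hkN sK0).
exact: hquad_tab.
Qed.

Lemma bTinvZ c (m : Mod N lam) : bTinv k (scaleM c m) = scaleM c (bTinv k m).
Proof. by rewrite !bTinv_eq /scaleM (gbTinvZ sK hk0 hkN). Qed.
End Final.

Section Folds.
Variables (N : nat) (lam : seq nat).
Hypothesis hpart : is_partition N lam.
Local Notation MM := (Mod N lam).

Definition goodk (l : seq nat) := all (fun k : nat => (0 < k)%N && (k < N)%N) l.

Lemma fold_cancel (l : seq nat) (x : MM) c : goodk l ->
  foldl (fun m k => bTinv k m) (scaleM c (foldl (fun m k => bT k m) x (rev l))) l = scaleM c x.
Proof.
elim: l x => [|k l IH] x //= /andP [/andP [hk0 hkN] hl].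
rewrite rev_cons foldl_rcons bTinvZ // bTK //.
exact: IH.
Qed.

Lemma fold_Z (l : seq nat) (x : MM) c : goodk l ->
  foldl (fun m k => bTinv k m) (scaleM c x) l = scaleM c (foldl (fun m k => bTinv k m) x l).
Proof.
elim: l x => [|k l IH] x //= /andP [/andP [hk0 hkN] hl].
by rewrite bTinvZ // IH.
Qed.

Lemma mulxN_Z c (m : MM) : mulxN (scaleM c m) = scaleM c (mulxN m).
Proof. by apply/ffunP => U; rewrite !ffunE scalerAr. Qed.

Lemma scaleMM a b (m : MM) : scaleM a (scaleM b m) = scaleM (a * b) m.
Proof. by apply/ffunP => U; rewrite !ffunE scalerA. Qed.

Lemma scaleM1 (m : MM) : scaleM 1 m = m.
Proof. by apply/ffunP => U; rewrite !ffunE scale1r. Qed.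

Lemma good_iota : (1 < N)%N -> goodk (iota 1 N.-1).
Proof.
move=> hN; apply/allP => k; rewrite mem_iota => /andP [h1 h2].
apply/andP; split; first by [].
by move: h2; rewrite add1n prednK //; lia.
Qed.

Lemma Phi_Z c (m : MM) : (1 < N)%N -> Phi (scaleM c m) = scaleM c (Phi m).
Proof. by move=> hN; rewrite /Phi fold_Z ?good_iota // mulxN_Z. Qed.

Lemma part1 (m : MM) : (2 <= N)%N -> Phi' m = scaleM (sK ^+ N.-1) (Phi (Xi 1 m)).
Proof.
move=> hN.
have [sK0 _] := sK_facts.
have eXi : Xi 1 m = scaleM (sK ^ (1%:Z - N%:Z)) (foldl (fun m k => bT k m) (bw m) (rev (iota 1 N.-1))).
  by rewrite /Xi subn1.
rewrite eXi /Phi fold_cancel ?good_iota // mulxN_Z scaleMM.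
have -> : (1%:Z - N%:Z = - (N.-1)%:Z)%R by rewrite predn_int; [ring | lia].
rewrite -exprnN mulfV ?expf_neq0 // scaleM1.
by [].
Qed.
End Folds.

Theorem proposition4p1 (N : nat) (lam : seq nat) :
  (2 <= N)%N -> is_partition N lam ->
  (forall m : Mod N lam, Phi' m = scaleM (sK ^+ N.-1) (Phi (Xi 1 m))) /\
  (forall (v : 'I_N -> nat) (T : tab N lam) (P : Mod N lam),
     (forall i : 'I_N, Xi i.+1 P = scaleM (qK ^+ v i * sK ^ CT T (rv v i.+1)) P) ->
     Phi' P = scaleM (sK ^ ((N.-1)%:Z + CT T (rv v 1)) * qK ^+ vnat v 0) (Phi P)).
Proof.
move=> hN hpart; split; first by move=> m; exact: part1.
move=> v T P hyp.
have h0N : (0 < N)%N by lia.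
have h0 : Xi 1 P = scaleM (qK ^+ v (Ordinal h0N) * sK ^ CT T (rv v 1)) P := hyp (Ordinal h0N).
rewrite part1 // h0 Phi_Z // scaleMM.
have -> : vnat v 0 = v (Ordinal h0N) by rewrite /vnat (insub_ord h0N).
have [sK0 _] := sK_facts.
rewrite (expfzDr (N.-1)%:Z (CT T (rv v 1)) sK0).
by rewrite mulrCA mulrC.
Qed.
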